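(* Every set star Lindelöf space of cardinality less than $\mathfrak d$ is set star Menger.
   Context: For a family $\mathcal U$ of subsets of $X$ and $A\subseteq X$, $st(A,\mathcal U)=\bigcup\{U\in\mathcal U: U\cap A\neq\emptyset\}$. $X$ is set star Lindelöf if for every nonempty $A\subseteq X$ and every family $\mathcal U$ of open subsets of $X$ with $\overline A\subseteq\bigcup\mathcal U$ there is a countable $\mathcal V\subseteq\mathcal U$ with $A\subseteq st(\bigcup\mathcal V,\mathcal U)$. $X$ is set star Menger if for every nonempty $A\subseteq X$ and every sequence $(\mathcal U_n:n\in\omega)$ of families of open sets with $\overline A\subseteq\bigcup\mathcal U_n$ for all $n$, there are finite $\mathcal V_n\subseteq\mathcal U_n$ with $A\subseteq\bigcup_n st(\bigcup\mathcal V_n,\mathcal U_n)$. $\mathfrak d$ is the minimal cardinality of a cofinal subset of $(\omega^\omega,\leq^* )$, where $f\leq^* g$ means $f(n)\leq g(n)$ for all but finitely many $n$. *)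

(* Defs.v *)
From HB Require Import structures.
From mathcomp Require Import all_boot all_order all_algebra.
From mathcomp Require Import all_classical all_reals all_analysis.
Set Implicit Arguments. Unset Strict Implicit. Unset Printing Implicit Defensive.
Local Open Scope classical_set_scope.

Definition star {T : Type} (A : set T) (U : set (set T)) : set T :=
  \bigcup_(V in [set V | U V /\ V `&` A !=set0]) V.

Definition open_family {T : topologicalType} (U : set (set T)) : Prop :=
  forall V, U V -> open V.

Definition set_star_Lindelof (T : topologicalType) : Prop :=
  forall (A : set T) (U : set (set T)),
    A !=set0 -> open_family U -> closure A `<=` \bigcup_(V in U) V ->
    exists W : set (set T), W `<=` U /\ countable W /\
      A `<=` star (\bigcup_(V in W) V) U.

Definition set_star_Menger (T : topologicalType) : Prop :=
  forall (A : set T) (U : nat -> set (set T)),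
    A !=set0 -> (forall n, open_family (U n)) ->
    (forall n, closure A `<=` \bigcup_(V in U n) V) ->
    exists W : nat -> set (set T),
      (forall n, W n `<=` U n /\ finite_set (W n)) /\
      A `<=` \bigcup_n star (\bigcup_(V in W n) V) (U n).

Definition le_star (f g : nat -> nat) : Prop :=
  exists N, forall n, (N <= n)%N -> (f n <= g n)%N.

Definition dominating (D : set (nat -> nat)) : Prop :=
  forall g, exists2 f, D f & le_star g f.

(* |X| < d  iff  not (d <= |X|), i.e. no dominating family D with |D| <= |X|
   (d being the least cardinality of a dominating family). *)
Definition card_lt_dominating (T : Type) : Prop :=
  ~ exists D : set (nat -> nat), dominating D /\ (D #<= [set: T])%card.

(* Main.v *)
Require Import Defs.
From mathcomp Require Import all_boot all_order all_algebra.
From mathcomp Require Import all_classical all_reals all_analysis.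
Local Open Scope classical_set_scope.

Lemma fin_inj (X : Type) (S : set X) (i : X -> nat) m :
  {in S &, injective i} -> finite_set [set V | S V /\ (i V <= m)%N].
Proof.
move=> ii.
have ii' : {in [set V | S V /\ (i V <= m)%N] &, injective i}.
  move=> a b; rewrite !in_setE /= => -[Sa _] [Sb _] e.
  by apply: ii => //; rewrite in_setE.
have /card_eqPle [_ le] := inj_card_eq ii'.
apply: card_le_finite le _.
apply: (@sub_finite_set _ _ `I_m.+1); last exact: finite_II.
by move=> k [V [_ h] <-] /=.
Qed.

Lemma star_mono (T : Type) (B C : set T) (U : set (set T)) :
  B `<=` C -> star B U `<=` star C U.
Proof.
move=> BC x [V [UV [y [Vy By]]] Vx]; exists V => //; split => //.
by exists y; split => //; apply: BC.
Qed.

Theorem proposition2p5 (T : topologicalType) :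
  set_star_Lindelof T -> card_lt_dominating T -> set_star_Menger T.
Proof.
move=> HL Hd A U A0 Uo Ucov.
have : forall n, exists p : set (set T) * (set T -> nat),
    p.1 `<=` U n /\ {in p.1 &, injective p.2} /\
    A `<=` star (\bigcup_(V in p.1) V) (U n).
  move=> n; have [W [WU [Wc WA]]] := HL A (U n) A0 (Uo n) (Ucov n).
  have /countable_injP [i ii] := Wc.
  by exists (W, i).
move=> /choice [p Hp].
pose S n k := [set V | (p n).1 V /\ ((p n).2 V <= k)%N].
pose P x n k := star (\bigcup_(V in S n k) V) (U n) x.
have Pmono : forall x n k k', (k <= k')%N -> P x n k -> P x n k'.
  move=> x n k k' kk'; apply: star_mono => y [V [h1 h2] Vy].
  by exists V => //; split => //; apply: leq_trans kk'.
have : forall xn : T * nat, exists k, (exists k', P xn.1 xn.2 k') -> P xn.1 xn.2 k.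
  move=> [x n] /=; case: (EM (exists k', P x n k')) => [[k' h]|h].
    by exists k'.
  by exists 0%N => /h.
move=> /choice [F0 HF0].
pose F (x : T) (n : nat) := F0 (x, n).
have [g Hg] : exists g, forall x, ~ le_star g (F x).
  apply: contrapT => H; apply: Hd; exists (range F); split; last exact: card_image_le.
  move=> g; apply: contrapT => ng; apply: H; exists g => x hx; apply: ng.
  by exists (F x) => //; exists x.
exists (fun n => S n (g n)); split.
  move=> n; split; first by move=> V [h _]; apply: (Hp n).1.
  by apply: fin_inj; exact: (Hp n).2.1.
move=> x Ax.
have [n hn] : exists n, ~ (g n <= F x n)%N.
  apply: contrapT => H; apply: (Hg x); exists 0%N => n _.
  by apply: contrapT => h; apply: H; exists n.
exists n => //.
have Pex : exists k, P x n k.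
  have [U0 [UU0 [y [U0y [V WV Vy]]]] U0x] := (Hp n).2.2 x Ax.
  exists ((p n).2 V); exists U0 => //; split => //.
  by exists y; split => //; exists V.
have := HF0 (x, n) Pex; rewrite -/(F x n) => PF.
apply: (Pmono x n (F x n)) => //.
by rewrite leqNgt; apply/negP => /ltnW h; apply: hn.
Qed.
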